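(* Let $\mathbb{F}$ be a field of characteristic $0$, $p,q>1$ integers with $p\neq q$, $\mathcal{J}_{\mathbb{F}}$ the Jordan triple system of all $p\times q$ matrices over $\mathbb{F}$ with triple product $\{x,y,z\}=xy^tz+zy^tx$, and $\mathcal{U}(\mathcal{J}_{\mathbb{F}})$ its universal associative envelope. Then $\mathcal{U}(\mathcal{J}_{\mathbb{F}})\cong M_{(p+q)\times(p+q)}(\mathbb{F})$, the associative algebra of all $(p+q)\times(p+q)$ matrices over $\mathbb{F}$.
   Context: Put $\Omega_1=\{1,\dots,p\}$, $\Omega_2=\{1,\dots,q\}$, and let $E_{i,j}$ ($i\in\Omega_1$, $j\in\Omega_2$) be the standard matrix units of $M_{p\times q}(\mathbb{F})$. Let $\mathfrak{F}$ be the free associative algebra (without identity element) over $\mathbb{F}$ on symbols $G_{i,j}$ ($i\in\Omega_1$, $j\in\Omega_2$), and let $\Phi:\mathcal{J}_{\mathbb{F}}\to\mathfrak{F}$ be the linear map with $\Phi(E_{i,j})=G_{i,j}$. Let $I$ be the two-sided ideal of $\mathfrak{F}$ generated by all elements $G_{i,j}G_{k,\ell}G_{s,t}+G_{s,t}G_{k,\ell}G_{i,j}-\Phi(\{E_{i,j},E_{k,\ell},E_{s,t}\})$ ($i,k,s\in\Omega_1$; $j,\ell,t\in\Omega_2$). The universal associative envelope is $\mathcal{U}(\mathcal{J}_{\mathbb{F}})=\mathfrak{F}/I$. *)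

(* Defs.v *)
From HB Require Import structures.
From mathcomp Require Import all_boot all_order all_algebra.
Set Implicit Arguments. Unset Strict Implicit. Unset Printing Implicit Defensive.
Import GRing.Theory.
Local Open Scope ring_scope.

(* Free associative algebra (without identity) over F on the symbols
   G_{i,j}, i : 'I_p, j : 'I_q.  An element is represented by its coefficient
   function on words (finite sequences of generator indices); elements of the
   free algebra are those functions with zero coefficient on the empty word
   (no identity) and finite support (= bounded degree, as there are finitely
   many words of each length). *)
Definition word (p q : nat) := seq ('I_p * 'I_q).
Definition fa (F : fieldType) (p q : nat) := word p q -> F.

Section FreeAlg.
Variables (F : fieldType) (p q : nat).
Implicit Types (f g : fa F p q).

Definition is_fa f : Prop :=
  f [::] = 0 /\ exists n : nat, forall w : word p q, (n <= size w)%N -> f w = 0.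

Definition fa_zero : fa F p q := fun _ => 0.
Definition fa_add f g : fa F p q := fun w => f w + g w.
Definition fa_scale (c : F) f : fa F p q := fun w => c * f w.
Definition fa_opp f : fa F p q := fa_scale (-1) f.
Definition fa_mul f g : fa F p q :=
  fun w => \sum_(i < (size w).+1) f (take i w) * g (drop i w).

Definition Phi (x : 'M[F]_(p, q)) : fa F p q :=
  fun w => match w with [:: a] => x a.1 a.2 | _ => 0 end.

Definition G (i : 'I_p) (j : 'I_q) : fa F p q := Phi (delta_mx i j).

Definition jtriple (x y z : 'M[F]_(p, q)) : 'M[F]_(p, q) :=
  x *m y^T *m z + z *m y^T *m x.

Definition rel_gen (i : 'I_p) (j : 'I_q) (k : 'I_p) (l : 'I_q)
  (s : 'I_p) (t : 'I_q) : fa F p q :=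
  fa_add (fa_add (fa_mul (fa_mul (G i j) (G k l)) (G s t))
                 (fa_mul (fa_mul (G s t) (G k l)) (G i j)))
         (fa_opp (Phi (jtriple (delta_mx i j) (delta_mx k l) (delta_mx s t)))).

Definition is_ideal (S : fa F p q -> Prop) : Prop :=
  [/\ forall f, S f -> is_fa f,
      S fa_zero,
      forall f g, S f -> S g -> S (fa_add f g),
      forall c f, S f -> S (fa_scale c f) &
      forall a f, is_fa a -> S f -> S (fa_mul a f) /\ S (fa_mul f a)].

Definition envI (f : fa F p q) : Prop :=
  forall S, is_ideal S -> (forall i j k l s t, S (rel_gen i j k l s t)) -> S f.

End FreeAlg.

(* Main.v *)
Require Import Defs.
From HB Require Import structures.
From mathcomp Require Import all_boot all_order all_algebra.
From Stdlib Require Import ClassicalEpsilon FunctionalExtensionality PropExtensionality.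
Set Implicit Arguments. Unset Strict Implicit. Unset Printing Implicit Defensive.
Import GRing.Theory.
Local Open Scope ring_scope.

Section Basic.
Variables (B : pzRingType) (p q : nat) (x : 'I_p -> 'I_q -> B).
Hypothesis Rel : forall i j k l s t,
  x i j * x k l * x s t + x s t * x k l * x i j =
  (if (j == l) && (k == s) then x i t else 0) +
  (if (l == t) && (i == k) then x s j else 0).
Hypothesis half : forall a b : B, a *+ 2 = b *+ 2 -> a = b.
Variables (i0 i1 : 'I_p) (j0 j1 : 'I_q).
Hypotheses (hi : i0 != i1) (hj : j0 != j1).

Definition opi (i : 'I_p) := if i == i0 then i1 else i0.
Definition opj (j : 'I_q) := if j == j0 then j1 else j0.
Lemma opiP i : opi i != i.
Proof. by rewrite /opi; case: ifP => [/eqP->|]; rewrite eq_sym // => ->. Qed.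
Lemma opjP j : opj j != j.
Proof. by rewrite /opj; case: ifP => [/eqP->|]; rewrite eq_sym // => ->. Qed.

Definition uu i k := x i j0 * x k j0.
Definition PP i := uu i (opi i) * uu (opi i) i.

Lemma cube i j k l : x i j * x k l * x i j = if (i == k) && (j == l) then x i j else 0.
Proof.
apply: half; rewrite mulr2n Rel (eq_sym k) (eq_sym l).
by case: (i == k); case: (j == l); rewrite /= ?mulr0n ?mulr2n ?addr0.
Qed.

Lemma cube_col i j k : x i j * x k j * x i j = if i == k then x i j else 0.
Proof. by rewrite cube eqxx andbT. Qed.

Lemma zero2 i j k l : i != k -> j != l -> x i j * x k l = 0.
Proof.
move=> ik jl.
have bab : x k l * x i j * x k l = 0 by rewrite cube eq_sym (negbTE ik).
have bbb : x k l * x k l * x k l = x k l by rewrite cube !eqxx.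
have e : x k l * x k l * x i j + x i j * x k l * x k l = 0.
  by rewrite Rel eqxx eq_sym (negbTE ik) (eq_sym l) (negbTE jl) /= addr0.
rewrite -{1}bbb !mulrA.
have -> : x i j * x k l * x k l = - (x k l * x k l * x i j).
  by apply/eqP; rewrite -addr_eq0 addrC e.
by rewrite mulNr -!mulrA (mulrA (x k l) (x i j)) bab mulr0 oppr0.
Qed.

Lemma dsym a b c d : x a b * x a b * x c d + x c d * x a b * x a b =
  (if a == c then x a d else 0) + (if b == d then x c b else 0).
Proof. by rewrite Rel !eqxx andbT. Qed.

Lemma colchange i k j l : i != k -> x i j * x k j = x i l * x k l.
Proof.
move=> ik; have [->//|jl] := eqVneq j l.
have am : x i j * x k l = 0 by rewrite zero2.
have e1 : x i j * x k j * x k l = x i l - x k l * x k j * x i j.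
  by apply/eqP; rewrite eq_sym subr_eq Rel !eqxx (negbTE jl) /= addr0.
have e2 : x k l * x k l * x k j + x k j * x k l * x k l = x k j.
  by rewrite dsym eqxx eq_sym (negbTE jl) addr0.
rewrite -{1}e2 mulrDr !mulrA am !mul0r add0r -(mulrA _ (x k l)) mulrA e1.
by rewrite mulrBl -!mulrA am !mulr0 subr0.
Qed.

Lemma trans a b c : a != b -> b != c -> a != c -> uu a b * uu b c = uu a c.
Proof.
move=> ab bc ac; rewrite /uu.
have e : x b j0 * x b j0 * x c j0 = x c j0 - x c j0 * x b j0 * x b j0.
  by apply/eqP; rewrite eq_sym subr_eq dsym (negbTE bc) eqxx add0r.
rewrite -!mulrA (mulrA (x b j0) (x b j0) (x c j0)) e mulrBr !mulrA.
by rewrite (colchange j0 j1 ac) -(mulrA _ (x c j1)) (@zero2 c j1 b j0 ltac:(by rewrite eq_sym) ltac:(by rewrite eq_sym)) mulr0 mul0r subr0.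
Qed.

Lemma Pind i k : k != i -> uu i k * uu k i = PP i.
Proof.
move=> ki; rewrite /PP; set m := opi i; have mi : m != i := opiP i.
have [<-//|km] := eqVneq k m.
rewrite -(trans km mi ki) mulrA (trans _ km) // eq_sym //.
Qed.

Lemma Pcol i k t : k != i -> x i t * x k t * x k t * x i t = PP i.
Proof.
move=> ki; rewrite -(Pind ki) /uu -mulrA -(colchange t j0 ki) -(colchange t j0 _); last by rewrite eq_sym.
by rewrite !mulrA.
Qed.

Lemma Pzl a c d : c != a -> PP a * x c d = 0.
Proof.
move=> ca; rewrite -(Pcol (opj d) (opiP a)) -mulrA (@zero2 a (opj d) c d) ?mulr0 //.
  by rewrite eq_sym.
exact: opjP.
Qed.

Lemma Pzr a c d : c != a -> x c d * PP a = 0.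
Proof.
move=> ca; rewrite -(Pcol (opj d) (opiP a)) !mulrA (@zero2 c d a (opj d)) ?mul0r //.
by rewrite eq_sym opjP.
Qed.
End Basic.

Section Mid.
Variables (B : pzRingType) (p q : nat) (x : 'I_p -> 'I_q -> B).
Hypothesis Rel : forall i j k l s t,
  x i j * x k l * x s t + x s t * x k l * x i j =
  (if (j == l) && (k == s) then x i t else 0) +
  (if (l == t) && (i == k) then x s j else 0).
Hypothesis half : forall a b : B, a *+ 2 = b *+ 2 -> a = b.
Variables (i0 i1 : 'I_p) (j0 j1 : 'I_q).
Hypotheses (hi : i0 != i1) (hj : j0 != j1).

Definition xt (j : 'I_q) (i : 'I_p) := x i j.
Lemma RelT j i l k t s : xt j i * xt l k * xt t s + xt t s * xt l k * xt j i =
  (if (i == k) && (l == t) then xt j s else 0) +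
  (if (k == s) && (j == l) then xt t i else 0).
Proof. by rewrite /xt Rel addrC andbC [(j == l) && _]andbC. Qed.

Definition QQ j := PP xt j0 j1 i0 j.
Notation P := (PP x i0 i1 j0).

Lemma rowchange j l i k : j != l -> x i j * x i l = x k j * x k l.
Proof. exact: (colchange RelT half). Qed.
Lemma Qcol j l s : l != j -> x s j * x s l * x s l * x s j = QQ j.
Proof. exact: (Pcol RelT half hj hi). Qed.
Lemma Qzl b c l : l != b -> QQ b * x c l = 0.
Proof. exact: (Pzl RelT half hj hi). Qed.
Lemma Qzr b c l : l != b -> x c l * QQ b = 0.
Proof. exact: (Pzr RelT half hj hi). Qed.

Lemma PV i j l : j != l -> P i * x i j * x i l = 0.
Proof.
move=> jl; rewrite -mulrA (rowchange _ (opi i0 i1 i)) // mulrA.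
by rewrite (Pzl Rel half hi hj) ?mul0r // opiP.
Qed.

Lemma PQ i j : P i * QQ j = 0.
Proof.
rewrite -(Qcol (opi i0 i1 i) (opjP hj j)) !mulrA.
by rewrite (Pzl Rel half hi hj) ?mul0r // opiP.
Qed.

Lemma DPQ s l : x s l * x s l = P s + QQ l.
Proof.
set k := opi i0 i1 s; set t := opj j0 j1 l.
have ks : k != s := opiP hi s.
have tl : t != l := opjP hj l.
have e : x s t * x k t * x k l + x k l * x k t * x s t = x s l.
  by rewrite Rel !eqxx (negbTE tl) /= addr0.
rewrite -{1}e mulrDl.
rewrite -(mulrA (x s t * x k t)) -(mulrA (x k l * x k t)) (colchange Rel half l t ks) (rowchange s k tl).
by rewrite !mulrA (Pcol Rel half hi hj _ ks) (Qcol _ tl).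
Qed.

Definition RR i t := P i * x i t.
Definition UU i k := RR i j0 * x k j0.

Lemma r1 i j s t : RR i j * x s t = if j == t then UU i s else 0.
Proof.
rewrite /UU /RR -!(mulrA (P i)).
have [<-|jt] := eqVneq j t.
  have [<-|si] := eqVneq s i.
    by rewrite !DPQ !mulrDr !PQ !addr0.
  by rewrite (colchange Rel half j j0) // eq_sym.
have [<-|si] := eqVneq s i; first by rewrite mulrA PV.
by rewrite (zero2 Rel half) ?mulr0 // eq_sym.
Qed.

Lemma r3 i k s t : UU i k * x s t = if k == s then RR i t else 0.
Proof.
rewrite /UU /RR.
have e : x i j0 * x k j0 * x s t = (if k == s then x i t else 0) +
   (if (j0 == t) && (i == k) then x s j0 else 0) - x s t * x k j0 * x i j0.
  by apply/eqP; rewrite eq_sym subr_eq Rel eqxx /=.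
rewrite -!(mulrA (P i)) e mulrBr mulrDr !(fun_if (fun z => P i * z)) !mulr0.
have [si|si] := eqVneq s i; last first.
  rewrite (mulrA (P i) (x s t * x k j0)) (mulrA (P i) (x s t)).
  by rewrite (Pzl Rel half hi hj t si) (Pzl Rel half hi hj j0 si) if_same !mul0r addr0 subr0.
subst s.
have [tj|tj] := eqVneq t j0.
  subst t; rewrite (cube_col Rel half) (eq_sym k).
  by case: (i == k); rewrite ?mulr0 ?subr0 ?addr0 ?addrK.
have -> : P i * (x i t * x k j0 * x i j0) = 0.
  have [ki|ki] := eqVneq k i.
    by subst k; rewrite !mulrA PV ?mul0r // eq_sym.
  by rewrite (zero2 Rel half (i:=i) (j:=t) (k:=k) (l:=j0)) ?mul0r ?mulr0 // eq_sym.
by rewrite subr0 /= addr0.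
Qed.
End Mid.

Lemma split_l m n (i : 'I_m) : split (lshift n i) = inl i.
Proof. exact: (unsplitK (inl i)). Qed.
Lemma split_r m n (i : 'I_n) : split (rshift m i) = inr i.
Proof. exact: (unsplitK (inr i)). Qed.

Section Final.
Variables (B : pzRingType) (p q : nat) (x : 'I_p -> 'I_q -> B).
Hypothesis Rel : forall i j k l s t,
  x i j * x k l * x s t + x s t * x k l * x i j =
  (if (j == l) && (k == s) then x i t else 0) +
  (if (l == t) && (i == k) then x s j else 0).
Hypothesis half : forall a b : B, a *+ 2 = b *+ 2 -> a = b.
Variables (i0 i1 : 'I_p) (j0 j1 : 'I_q).
Hypotheses (hi : i0 != i1) (hj : j0 != j1).

Definition LL t i := QQ x i0 j0 j1 t * x i t.
Definition VV j l := LL j i0 * x i0 l.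
Notation R := (RR x i0 i1 j0).
Notation U := (UU x i0 i1 j0).

Lemma r2 j i s t : LL j i * x s t = if i == s then VV j t else 0.
Proof. exact: (r1 (RelT Rel) half hj hi). Qed.
Lemma r4 j l s t : VV j l * x s t = if l == t then LL j s else 0.
Proof. exact: (r3 (RelT Rel) half hj hi). Qed.
Lemma r0 s t : x s t = R s t + LL t s.
Proof.
rewrite /RR /LL -mulrDl -(DPQ Rel half hi hj).
by rewrite (cube_col Rel half) eqxx.
Qed.

Definition ee (a b : 'I_(p + q)) : B :=
  match split a with
  | inl i => match split b with inl k => U i k | inr t => R i t end
  | inr t => match split b with inl i => LL t i | inr l => VV t l end
  end.

Lemma ee_rule a b s t : ee a b * x s t =
  (if b == lshift q s then ee a (rshift p t) else 0) +
  (if b == rshift p t then ee a (lshift q s) else 0).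
Proof.
rewrite /ee; case: (split_ordP b) => b' ->; case: (split_ordP a) => a' _;
  rewrite ?eq_lshift ?eq_rshift ?eq_lrshift ?eq_rlshift ?split_l ?split_r.
- by rewrite (r3 Rel half hi hj) addr0.
- by rewrite r2 addr0.
- by rewrite (r1 Rel half hi hj) add0r.
- by rewrite r4 add0r.
Qed.

Lemma ee_base s t : x s t = ee (lshift q s) (rshift p t) + ee (rshift p t) (lshift q s).
Proof. by rewrite /ee !split_l !split_r r0. Qed.
End Final.


Section Mat.
Variables (F : fieldType) (p q : nat).
Local Notation M := 'M[F]_(p + q).
Definition EU i k : M := delta_mx (lshift q i) (lshift q k).
Definition ER i t : M := delta_mx (lshift q i) (rshift p t).
Definition ELf t i : M := delta_mx (rshift p t) (lshift q i).
Definition EL j l : M := delta_mx (rshift p j) (rshift p l).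
Definition XX s t : M := ER s t + ELf t s.

Ltac tab := rewrite /XX mulrDr -!mulmxE !mul_delta_mx_cond ?eq_lshift ?eq_rshift ?eq_lrshift ?eq_rlshift ?mulr0n ?add0r ?addr0 mulrb.

Lemma tU i k s t : EU i k * XX s t = if k == s then ER i t else 0. Proof. by tab. Qed.
Lemma tR i j s t : ER i j * XX s t = if j == t then EU i s else 0. Proof. by tab. Qed.
Lemma tLf j i s t : ELf j i * XX s t = if i == s then EL j t else 0. Proof. by tab. Qed.
Lemma tL j l s t : EL j l * XX s t = if l == t then ELf j s else 0. Proof. by tab. Qed.

Lemma ifM (R : pzRingType) (b : bool) (A C : R) : (if b then A else 0) * C = if b then A * C else 0.
Proof. by case: b; rewrite ?mul0r. Qed.
Lemma ifif (R : zmodType) (a b : bool) (A : R) :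
  (if a then (if b then A else 0) else 0) = if a && b then A else 0.
Proof. by case: a; case: b. Qed.

Lemma XXm i j k l : XX i j * XX k l = (if j == l then EU i k else 0) + (if i == k then EL j l else 0).
Proof. by rewrite {1}/XX mulrDl tR tLf. Qed.

Lemma XXXm i j k l s t : XX i j * XX k l * XX s t =
  (if (j == l) && (k == s) then ER i t else 0) + (if (i == k) && (l == t) then ELf j s else 0).
Proof. by rewrite XXm mulrDl !ifM tU tL !ifif. Qed.

Lemma RelM i j k l s t : XX i j * XX k l * XX s t + XX s t * XX k l * XX i j =
  (if (j == l) && (k == s) then XX i t else 0) +
  (if (l == t) && (i == k) then XX s j else 0).
Proof.
rewrite !XXXm (eq_sym t) (eq_sym k i) (eq_sym s) (eq_sym l j) [(l == t) && _]andbC.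
rewrite [(k == s) && _]andbC.
case: ((j == l) && (k == s)); case: ((i == k) && (l == t)); rewrite /XX ?addr0 ?add0r //.
- by rewrite addrACA [ELf j s + _]addrC addrACA [ER s j + _]addrC.
- by rewrite addrC.
Qed.
End Mat.

Section Words.
Variables (F : fieldType) (p q : nat).
Variables (i0 i1 : 'I_p) (j0 j1 : 'I_q).
Hypotheses (hi : i0 != i1) (hj : j0 != j1).
Local Notation M := 'M[F]_(p + q).

Definition Xw (w : seq ('I_p * 'I_q)) : M := \prod_(a <- w) XX F a.1 a.2.

Definition wordof (a b : 'I_(p + q)) : seq ('I_p * 'I_q) :=
  match split a, split b with
  | inl i, inl k => [:: (i, j0); (opi i0 i1 i, j0); (opi i0 i1 i, j0); (k, j0)]
  | inl i, inr t => [:: (i, j0); (opi i0 i1 i, j0); (opi i0 i1 i, t)]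
  | inr j, inl i => [:: (i0, j); (i0, opj j0 j1 j); (i, opj j0 j1 j)]
  | inr j, inr l => [:: (i0, j); (i0, opj j0 j1 j); (i0, opj j0 j1 j); (i0, l)]
  end.

Lemma wordof_nil a b : wordof a b != [::].
Proof. by rewrite /wordof; case: (split a); case: (split b). Qed.

Lemma Xw_wordof a b : Xw (wordof a b) = delta_mx a b.
Proof.
have ni i : (i == opi i0 i1 i) = false by rewrite eq_sym (negbTE (opiP hi i)).
have nj j : (j == opj j0 j1 j) = false by rewrite eq_sym (negbTE (opjP hj j)).
rewrite /wordof /Xw; case: (split_ordP a) => i ->; case: (split_ordP b) => k ->;
  rewrite ?split_l ?split_r !big_cons big_nil mulr1 /= !mulrA XXm ?ni ?nj eqxx ?addr0 ?add0r.
- by rewrite tU eqxx tR eqxx.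
- by rewrite tU eqxx.
- by rewrite tL eqxx.
- by rewrite tL eqxx tLf eqxx.
Qed.
End Words.


Section FA.
Variables (F : fieldType) (p q : nat).
Local Notation fa := (fa F p q).
Local Notation word := (word p q).

Definition evl (l : seq (F * word)) : fa :=
  fun w => \sum_(x <- l) x.1 * (w == x.2)%:R.
Definition lscale (c : F) (l : seq (F * word)) := [seq (c * x.1, x.2) | x <- l].
Definition lmul (l1 l2 : seq (F * word)) :=
  [seq (a.1 * b.1, a.2 ++ b.2) | a <- l1, b <- l2].

Lemma evl_cat l1 l2 : evl (l1 ++ l2) = fa_add (evl l1) (evl l2).
Proof. by apply: functional_extensionality => w; rewrite /evl /fa_add big_cat. Qed.

Lemma evl_nil : evl [::] = @fa_zero F p q.
Proof. by apply: functional_extensionality => w; rewrite /evl big_nil. Qed.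

Lemma evl_scale c l : evl (lscale c l) = fa_scale c (evl l).
Proof.
apply: functional_extensionality => w; rewrite /evl /fa_scale big_map mulr_sumr.
by apply: eq_bigr => x _; rewrite mulrA.
Qed.

Lemma take_drop_sum (w u v : word) :
  \sum_(i < (size w).+1) (take i w == u)%:R * (drop i w == v)%:R = (w == u ++ v)%:R :> F.
Proof.
have [->|ne] := eqVneq w (u ++ v).
  have hu : (size u < (size (u ++ v)).+1)%N by rewrite size_cat ltnS leq_addr.
  rewrite (bigD1 (Ordinal hu)) //= take_size_cat // drop_size_cat // !eqxx mulr1.
  rewrite big1 ?addr0 // => i /eqP ne.
  case: eqP => [e|]; last by rewrite mul0r.
  case: ne; apply: val_inj => /=; rewrite -(congr1 size e) size_takel //.
  by rewrite -ltnS.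
rewrite big1 // => i _.
case: eqP => [e1|]; last by rewrite mul0r.
case: eqP => [e2|]; last by rewrite mulr0.
by case/eqP: ne; rewrite -e1 -e2 cat_take_drop.
Qed.

Lemma evl_mul l1 l2 : fa_mul (evl l1) (evl l2) = evl (lmul l1 l2).
Proof.
apply: functional_extensionality => w; rewrite /fa_mul /evl big_allpairs_dep /=.
transitivity (\sum_(i < (size w).+1) \sum_(a <- l1) \sum_(b <- l2)
   (a.1 * b.1) * ((take i w == a.2)%:R * (drop i w == b.2)%:R)).
  apply: eq_bigr => i _; rewrite mulr_suml; apply: eq_bigr => a _.
  by rewrite mulr_sumr; apply: eq_bigr => b _; rewrite mulrACA.
rewrite exchange_big; apply: eq_bigr => a _.
rewrite exchange_big; apply: eq_bigr => b _.
by rewrite -mulr_sumr take_drop_sum.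
Qed.
End FA.

Section Ideal.
Variables (F : fieldType) (p q : nat).
Local Notation fa := (fa F p q).
Local Notation word := (word p q).

Implicit Types (f g a b d : fa).
Definition dl (u : word) : fa := fun w => (w == u)%:R.

Lemma isfa_zero : is_fa (@fa_zero F p q).
Proof. by split => //; exists 0%N. Qed.

Lemma isfa_add f g : is_fa f -> is_fa g -> is_fa (fa_add f g).
Proof.
case=> f0 [n fn] [g0 [m gm]]; split; first by rewrite /fa_add f0 g0 addr0.
exists (maxn n m) => w; rewrite geq_max => /andP[h1 h2].
by rewrite /fa_add fn // gm // addr0.
Qed.

Lemma isfa_scale c f : is_fa f -> is_fa (fa_scale c f).
Proof.
case=> f0 [n fn]; split; first by rewrite /fa_scale f0 mulr0.
by exists n => w h; rewrite /fa_scale fn // mulr0.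
Qed.

Lemma isfa_mul f g : is_fa f -> is_fa g -> is_fa (fa_mul f g).
Proof.
case=> f0 [n fn] [g0 [m gm]]; split.
  by rewrite /fa_mul big_ord_recl big_ord0 /= f0 mul0r addr0.
exists (n + m)%N => w h; rewrite /fa_mul big1 // => i _.
case: (leqP n i) => ni.
  rewrite fn ?mul0r // size_takel // -ltnS; exact: ltn_ord.
rewrite gm ?mulr0 // size_drop leq_subRL; last by rewrite -ltnS ltn_ord.
  by apply: leq_trans h; rewrite leq_add2r ltnW.
Qed.

Lemma isfa_Phi (x : 'M[F]_(p, q)) : is_fa (Phi x).
Proof. split=> //; exists 2%N => [[|a [|b w]]] //. Qed.

Lemma isfa_G i j : is_fa (@G F p q i j).
Proof. exact: isfa_Phi. Qed.

Lemma isfa_rel i j k l s t : is_fa (@rel_gen F p q i j k l s t).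
Proof.
rewrite /rel_gen /fa_opp.
by apply: isfa_add; [apply: isfa_add|apply: isfa_scale; apply: isfa_Phi];
  repeat apply: isfa_mul; apply: isfa_G.
Qed.

Lemma isfa_ideal : is_ideal (@is_fa F p q).
Proof.
split => //; [exact: isfa_zero|exact: isfa_add|exact: isfa_scale|].
by move=> a f ha hf; split; apply: isfa_mul.
Qed.

Lemma envI_isfa f : envI f -> is_fa f.
Proof. by move=> h; apply: h; [exact: isfa_ideal|exact: isfa_rel]. Qed.

Lemma envI_zero : envI (@fa_zero F p q).
Proof. by move=> S [] . Qed.

Lemma envI_add f g : envI f -> envI g -> envI (fa_add f g).
Proof. by move=> hf hg S IS hr; case: (IS) => _ _ hadd _ _; apply: hadd; [apply: hf|apply: hg]. Qed.

Lemma envI_scale c f : envI f -> envI (fa_scale c f).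
Proof. by move=> hf S IS hr; case: (IS) => _ _ _ hs _; apply: hs; apply: hf. Qed.

Lemma envI_mull a f : is_fa a -> envI f -> envI (fa_mul a f).
Proof. by move=> ha hf S IS hr; case: (IS) => _ _ _ _ hm; case: (hm a f ha (hf S IS hr)). Qed.

Lemma envI_mulr a f : is_fa a -> envI f -> envI (fa_mul f a).
Proof. by move=> ha hf S IS hr; case: (IS) => _ _ _ _ hm; case: (hm a f ha (hf S IS hr)). Qed.

Lemma envI_rel i j k l s t : envI (@rel_gen F p q i j k l s t).
Proof. by move=> S IS hr; apply: hr. Qed.

Lemma isfa_dl u : u != [::] -> is_fa (dl u).
Proof.
move=> nu; split; first by rewrite /dl eq_sym (negbTE nu).
exists (size u).+1 => w h; rewrite /dl; case: eqP => // e.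
by move: h; rewrite e ltnn.
Qed.

Lemma mul_dl0r f : fa_mul f (dl [::]) = f.
Proof.
apply: functional_extensionality => w; rewrite /fa_mul /dl big_ord_recr /= drop_size take_size eqxx mulr1.
rewrite big1 ?add0r // => i _; case: eqP; rewrite ?mulr0 // => /(congr1 size) /eqP.
by rewrite size_drop /= subn_eq0 leqNgt ltn_ord.
Qed.

Lemma mul_dl0l f : fa_mul (dl [::]) f = f.
Proof.
apply: functional_extensionality => w; rewrite /fa_mul /dl big_ord_recl /= take0 drop0 eqxx mul1r.
rewrite big1 ?addr0 // => i _; case: eqP; rewrite ?mul0r // => /(congr1 size).
by rewrite /= size_takel // ltn_ord.
Qed.

Lemma evl_cons x l : evl (x :: l) = fa_add (fa_scale x.1 (dl x.2)) (evl l).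
Proof. by apply: functional_extensionality => w; rewrite /evl big_cons. Qed.

Lemma mul_addr f a b : fa_mul f (fa_add a b) = fa_add (fa_mul f a) (fa_mul f b).
Proof.
apply: functional_extensionality => w; rewrite /fa_mul /fa_add -big_split.
by apply: eq_bigr => i _; rewrite mulrDr.
Qed.
Lemma mul_addl f a b : fa_mul (fa_add a b) f = fa_add (fa_mul a f) (fa_mul b f).
Proof.
apply: functional_extensionality => w; rewrite /fa_mul /fa_add -big_split.
by apply: eq_bigr => i _; rewrite mulrDl.
Qed.
Lemma mul_scaler f c a : fa_mul f (fa_scale c a) = fa_scale c (fa_mul f a).
Proof.
apply: functional_extensionality => w; rewrite /fa_mul /fa_scale mulr_sumr.
by apply: eq_bigr => i _; rewrite mulrCA.
Qed.
Lemma mul_scalel f c a : fa_mul (fa_scale c a) f = fa_scale c (fa_mul a f).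
Proof.
apply: functional_extensionality => w; rewrite /fa_mul /fa_scale mulr_sumr.
by apply: eq_bigr => i _; rewrite mulrA.
Qed.

Lemma envI_mulr_evl d l : envI d -> envI (fa_mul d (evl l)).
Proof.
move=> hd; elim: l => [|x l IH].
  have -> : fa_mul d (evl [::]) = @fa_zero F p q.
    by apply: functional_extensionality => w; rewrite /fa_mul /evl big1 // => i _; rewrite big_nil mulr0.
  exact: envI_zero.
rewrite evl_cons mul_addr mul_scaler; apply: envI_add => //; apply: envI_scale.
have [->|nu] := eqVneq x.2 [::]; first by rewrite mul_dl0r.
by apply: envI_mulr => //; apply: isfa_dl.
Qed.

Lemma envI_mull_evl d l : envI d -> envI (fa_mul (evl l) d).
Proof.
move=> hd; elim: l => [|x l IH].
  have -> : fa_mul (evl [::]) d = @fa_zero F p q.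
    by apply: functional_extensionality => w; rewrite /fa_mul /evl big1 // => i _; rewrite big_nil mul0r.
  exact: envI_zero.
rewrite evl_cons mul_addl mul_scalel; apply: envI_add => //; apply: envI_scale.
have [->|nu] := eqVneq x.2 [::]; first by rewrite mul_dl0l.
by apply: envI_mull => //; apply: isfa_dl.
Qed.
End Ideal.

Section Quot.
Variables (F : fieldType) (p q : nat).
Local Notation fa := (fa F p q).
Local Notation word := (word p q).
Local Notation L := (seq (F * word)).
Implicit Types (l : L).

Definition EE l1 l2 : Prop := envI (fa_add (evl l1) (fa_opp (evl l2))).

Lemma EE_ev l1 l2 : evl l1 = evl l2 -> EE l1 l2.
Proof.
move=> e; rewrite /EE e.
have -> : fa_add (evl l2) (fa_opp (evl l2)) = @fa_zero F p q.
  by apply: functional_extensionality => w; rewrite /fa_add /fa_opp /fa_scale mulN1r subrr.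
exact: envI_zero.
Qed.

Lemma EE_refl l : EE l l. Proof. exact: EE_ev. Qed.

Lemma EE_sym l1 l2 : EE l1 l2 -> EE l2 l1.
Proof.
move=> h; have := envI_scale (-1) h; congr envI.
apply: functional_extensionality => w; rewrite /fa_add /fa_opp /fa_scale.
by rewrite !mulN1r opprD opprK addrC.
Qed.

Lemma EE_trans l1 l2 l3 : EE l1 l2 -> EE l2 l3 -> EE l1 l3.
Proof.
move=> h1 h2; have := envI_add h1 h2; congr envI.
apply: functional_extensionality => w; rewrite /fa_add /fa_opp /fa_scale.
by rewrite !mulN1r addrA subrK.
Qed.

Lemma EE_cat a a' b b' : EE a a' -> EE b b' -> EE (a ++ b) (a' ++ b').
Proof.
move=> h1 h2; have := envI_add h1 h2; congr envI; rewrite !evl_cat.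
apply: functional_extensionality => w; rewrite /fa_add /fa_opp /fa_scale.
by rewrite !mulN1r opprD addrACA.
Qed.

Lemma EE_scale c a a' : EE a a' -> EE (lscale c a) (lscale c a').
Proof.
move=> h; have := envI_scale c h; congr envI; rewrite !evl_scale.
apply: functional_extensionality => w; rewrite /fa_add /fa_opp /fa_scale.
by rewrite !mulN1r mulrDr mulrN.
Qed.

Lemma EE_mul a a' b b' : EE a a' -> EE b b' -> EE (lmul a b) (lmul a' b').
Proof.
move=> h1 h2.
have := envI_add (envI_mulr_evl b h1) (envI_mull_evl a' h2); congr envI.
rewrite -!evl_mul mul_addl mul_addr /fa_opp mul_scalel mul_scaler.
apply: functional_extensionality => w; rewrite /fa_add /fa_scale.
by rewrite !mulN1r addrA subrK.
Qed.

Definition canonL l : L := epsilon (inhabits [::]) (EE l).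

Lemma EE_canon l : EE l (canonL l).
Proof. exact: (epsilon_spec (inhabits [::]) (EE l) (ex_intro _ l (EE_refl l))). Qed.

Lemma canon_eq l1 l2 : EE l1 l2 -> canonL l1 = canonL l2.
Proof.
move=> h; rewrite /canonL; congr epsilon.
apply: functional_extensionality => y; apply: propositional_extensionality.
split => h'; [exact: EE_trans (EE_sym h) h'|exact: EE_trans h h'].
Qed.

Definition Q := {l : L | canonL l == l}.
HB.instance Definition _ := Choice.on Q.

Lemma canon_idem l : canonL (canonL l) == canonL l.
Proof. by apply/eqP; apply: canon_eq; apply: EE_sym; apply: EE_canon. Qed.

Definition piq l : Q := exist _ (canonL l) (canon_idem l).

Lemma piqK (a : Q) : piq (val a) = a.
Proof. by apply: val_inj => /=; apply/eqP; case: a. Qed.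

Lemma piq_eq l1 l2 : EE l1 l2 -> piq l1 = piq l2.
Proof. by move=> h; apply: val_inj => /=; apply: canon_eq. Qed.

Lemma piq_inj l1 l2 : piq l1 = piq l2 -> EE l1 l2.
Proof.
move/(congr1 val) => /= e.
by apply: EE_trans (EE_canon l1) _; rewrite e; apply: EE_sym; apply: EE_canon.
Qed.

Lemma EE_piq l : EE (val (piq l)) l.
Proof. exact: EE_sym (EE_canon l). Qed.
End Quot.

Section QuotRing.
Variables (F : fieldType) (p q : nat).
Local Notation fa := (fa F p q).
Local Notation word := (word p q).
Local Notation L := (seq (F * word)).
Local Notation Q := (Q F p q).
Implicit Types (l : L).

Definition zeroq : Q := piq [::].
Definition addq := locked (fun a b : Q => piq (val a ++ val b)).
Definition oppq := locked (fun a : Q => piq (lscale (-1) (val a))).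

Lemma piq_add l1 l2 : addq (piq l1) (piq l2) = piq (l1 ++ l2).
Proof. rewrite /addq -lock /=; apply: piq_eq; apply: EE_cat; apply: EE_piq. Qed.
Lemma piq_opp l : oppq (piq l) = piq (lscale (-1) l).
Proof. rewrite /oppq -lock /=; apply: piq_eq; apply: EE_scale; apply: EE_piq. Qed.

Lemma addqA : associative addq.
Proof. by move=> a b c; rewrite -[a]piqK -[b]piqK -[c]piqK !piq_add catA. Qed.
Lemma addqC : commutative addq.
Proof.
move=> a b; rewrite -[a]piqK -[b]piqK !piq_add; apply: piq_eq; apply: EE_ev.
by rewrite !evl_cat; apply: functional_extensionality => w; rewrite /fa_add addrC.
Qed.
Lemma add0q : left_id zeroq addq.
Proof. by move=> a; rewrite -[a]piqK piq_add. Qed.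
Lemma addNq : left_inverse zeroq oppq addq.
Proof.
move=> a; rewrite -[a]piqK piq_opp piq_add; apply: piq_eq; apply: EE_ev.
rewrite evl_cat evl_scale evl_nil; apply: functional_extensionality => w.
by rewrite /fa_add /fa_scale /fa_zero mulN1r addNr.
Qed.

HB.instance Definition _ := GRing.isZmodule.Build Q addqA addqC add0q addNq.

Definition oneq : Q := piq [:: (1, [::])].
Definition mulq := locked (fun a b : Q => piq (lmul (val a) (val b))).
Lemma piq_mul l1 l2 : mulq (piq l1) (piq l2) = piq (lmul l1 l2).
Proof. rewrite /mulq -lock /=; apply: piq_eq; apply: EE_mul; apply: EE_piq. Qed.

Lemma mulqA : associative mulq.
Proof.
move=> a b c; rewrite -[a]piqK -[b]piqK -[c]piqK !piq_mul; apply: piq_eq; apply: EE_ev.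
apply: functional_extensionality => w; rewrite /evl !big_allpairs_dep /=.
apply: eq_bigr => x _; rewrite big_allpairs_dep /=; apply: eq_bigr => y _.
by apply: eq_bigr => z _; rewrite mulrA catA.
Qed.
Lemma mul1q : left_id oneq mulq.
Proof.
move=> a; rewrite -[a]piqK piq_mul; apply: piq_eq; apply: EE_ev.
apply: functional_extensionality => w; rewrite /evl !big_allpairs_dep /= big_seq1 /=.
by apply: eq_bigr => x _; rewrite mul1r.
Qed.
Lemma mulq1 : right_id oneq mulq.
Proof.
move=> a; rewrite -[a]piqK piq_mul; apply: piq_eq; apply: EE_ev.
apply: functional_extensionality => w; rewrite /evl !big_allpairs_dep /=.
by apply: eq_bigr => x _; rewrite big_seq1 /= mulr1 cats0.
Qed.
Lemma mulqDl : left_distributive mulq addq.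
Proof.
move=> a b c; rewrite -[a]piqK -[b]piqK -[c]piqK !piq_add !piq_mul piq_add.
apply: piq_eq; apply: EE_ev; apply: functional_extensionality => w.
by rewrite /evl big_cat !big_allpairs_dep big_cat.
Qed.
Lemma mulqDr : right_distributive mulq addq.
Proof.
move=> a b c; rewrite -[a]piqK -[b]piqK -[c]piqK !piq_add !piq_mul piq_add.
apply: piq_eq; apply: EE_ev; apply: functional_extensionality => w.
rewrite /evl big_cat !big_allpairs_dep.
by under eq_bigr do rewrite big_cat; rewrite big_split.
Qed.

HB.instance Definition _ := GRing.Zmodule_isPzRing.Build Q mulqA mul1q mulq1 mulqDl mulqDr.

Definition scaleq := locked (fun (c : F) (a : Q) => piq (lscale c (val a))).
Lemma piq_scale c l : scaleq c (piq l) = piq (lscale c l).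
Proof. rewrite /scaleq -lock /=; apply: piq_eq; apply: EE_scale; apply: EE_piq. Qed.

Lemma scaleqA c d a : scaleq c (scaleq d a) = scaleq (c * d) a.
Proof.
rewrite -[a]piqK !piq_scale; apply: piq_eq; apply: EE_ev; rewrite !evl_scale.
by apply: functional_extensionality => w; rewrite /fa_scale mulrA.
Qed.
Lemma scale1q : left_id 1 scaleq.
Proof.
move=> a; rewrite -[a]piqK !piq_scale; apply: piq_eq; apply: EE_ev; rewrite !evl_scale.
by apply: functional_extensionality => w; rewrite /fa_scale mul1r.
Qed.
Lemma scaleqDr : right_distributive scaleq addq.
Proof.
move=> c a b; rewrite -[a]piqK -[b]piqK piq_add !piq_scale piq_add.
by rewrite /lscale map_cat.
Qed.
Lemma scaleqDl a : {morph scaleq^~ a : c d / c + d >-> addq c d}.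
Proof.
move=> c d; rewrite -[a]piqK !piq_scale piq_add; apply: piq_eq; apply: EE_ev.
rewrite evl_cat !evl_scale.
by apply: functional_extensionality => w; rewrite /fa_scale /fa_add mulrDl.
Qed.

HB.instance Definition _ := GRing.Zmodule_isLmodule.Build F Q scaleqA scale1q scaleqDr scaleqDl.

Lemma scaleqAl (c : F) (a b : Q) : (c *: a) * b = c *: (a * b).
Proof.
rewrite -[a]piqK -[b]piqK; rewrite /GRing.scale /GRing.mul /=.
rewrite piq_scale !piq_mul piq_scale; apply: piq_eq; apply: EE_ev.
by rewrite -evl_mul !evl_scale -evl_mul mul_scalel.
Qed.
Lemma scaleqAr (c : F) (a b : Q) : a * (c *: b) = c *: (a * b).
Proof.
rewrite -[a]piqK -[b]piqK; rewrite /GRing.scale /GRing.mul /=.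
rewrite piq_scale !piq_mul piq_scale; apply: piq_eq; apply: EE_ev.
by rewrite -evl_mul !evl_scale -evl_mul mul_scaler.
Qed.
End QuotRing.


Section Rels.
Variables (F : fieldType) (p q : nat).
Local Notation fa := (fa F p q).
Local Notation word := (word p q).
Local Notation L := (seq (F * word)).
Local Notation Q := (Q F p q).

Lemma piqM (l1 l2 : L) : piq l1 * piq l2 = piq (lmul l1 l2) :> Q.
Proof. exact: piq_mul. Qed.
Lemma piqD (l1 l2 : L) : piq l1 + piq l2 = piq (l1 ++ l2) :> Q.
Proof. exact: piq_add. Qed.
Lemma piqZ c (l : L) : c *: piq l = piq (lscale c l) :> Q.
Proof. exact: piq_scale. Qed.
Lemma piq0 : 0 = piq [::] :> Q.
Proof. by []. Qed.

Definition gen1 (s : 'I_p) (t : 'I_q) : L := [:: (1, [:: (s, t)])].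
Definition xq s t : Q := piq (gen1 s t).

Lemma G_evl i j : @G F p q i j = evl (gen1 i j).
Proof.
apply: functional_extensionality => w; rewrite /G /Phi /evl big_seq1 /= mul1r.
case: w => [|a [|b w]] //=; last by rewrite eqseq_cons andbF.
rewrite /delta_mx mxE eqseq_cons andbT.
by case: a => a1 a2; rewrite xpair_eqE.
Qed.

Lemma mulmxb m n r (A : 'M[F]_(m, n)) (C : 'M[F]_(n, r)) (b : bool) :
  (A *+ b) *m C = (A *m C) *+ b.
Proof. by case: b; rewrite /= ?mulr0n ?mul0mx. Qed.

Lemma jt_delta i j k l s t : jtriple (delta_mx i j) (delta_mx k l) (delta_mx s t) =
  (if (j == l) && (k == s) then delta_mx i t else 0) +
  (if (l == t) && (i == k) then delta_mx s j else 0) :> 'M[F]_(p, q).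
Proof.
rewrite /jtriple !trmx_delta !mul_delta_mx_cond !mulmxb !mul_delta_mx_cond !mulrb.
by rewrite !ifif (eq_sym t) (eq_sym k i).
Qed.

Definition ifl (b : bool) (l : L) : L := if b then l else [::].

Lemma Phi_jt i j k l s t :
  Phi (jtriple (delta_mx i j) (delta_mx k l) (delta_mx s t)) =
  evl (ifl ((j == l) && (k == s)) (gen1 i t) ++ ifl ((l == t) && (i == k)) (gen1 s j)).
Proof.
rewrite jt_delta evl_cat.
case: ((j == l) && (k == s)); case: ((l == t) && (i == k)); rewrite /ifl ?evl_nil -?G_evl;
  apply: functional_extensionality => w; rewrite /fa_add /fa_zero /G /Phi;
  case: w => [|a [|b w]] //=; rewrite ?mxE ?addr0 ?add0r //.
Qed.

Lemma rel_gen_evl i j k l s t : @rel_gen F p q i j k l s t =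
  fa_add (evl (lmul (lmul (gen1 i j) (gen1 k l)) (gen1 s t) ++
               lmul (lmul (gen1 s t) (gen1 k l)) (gen1 i j)))
   (fa_opp (evl (ifl ((j == l) && (k == s)) (gen1 i t) ++ ifl ((l == t) && (i == k)) (gen1 s j)))).
Proof. by rewrite /rel_gen Phi_jt !G_evl !evl_mul [X in _ = fa_add X _]evl_cat. Qed.

Lemma RelQ i j k l s t :
  xq i j * xq k l * xq s t + xq s t * xq k l * xq i j =
  (if (j == l) && (k == s) then xq i t else 0) +
  (if (l == t) && (i == k) then xq s j else 0).
Proof.
have e b (l0 : L) : (if b then piq l0 else 0) = piq (ifl b l0) :> Q by case: b.
rewrite /xq !piqM piqD !e piqD; apply: piq_eq.
have eq : fa_add (evl (lmul (lmul (gen1 i j) (gen1 k l)) (gen1 s t) ++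
                        lmul (lmul (gen1 s t) (gen1 k l)) (gen1 i j)))
   (fa_opp (evl (ifl ((j == l) && (k == s)) (gen1 i t) ++ ifl ((l == t) && (i == k)) (gen1 s j))))
   = @rel_gen F p q i j k l s t.
  by rewrite /rel_gen Phi_jt !G_evl !evl_mul [X in fa_add X _ = _]evl_cat.
by rewrite /EE eq; apply: envI_rel.
Qed.
End Rels.


Section Words2.
Variables (p q : nat).
Local Notation word := (word p q).
Local Notation A := ('I_p * 'I_q)%type.

Fixpoint wordsE (k : nat) : seq word :=
  if k is k'.+1 then [seq a :: w | a <- enum [set: A], w <- wordsE k'] else [:: [::]].
Fixpoint words (n : nat) : seq word :=
  if n is n'.+1 then words n' ++ wordsE n' else [::].

Lemma mem_wordsE k w : (w \in wordsE k) = (size w == k).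
Proof.
elim: k w => [|k IH] [|a w]; rewrite /= ?in_cons ?orbF //.
  by apply/negP => /allpairsP [[b v] [_ _ //]].
have -> : ((size w).+1 == k.+1) = (w \in wordsE k) by rewrite IH.
apply/allpairsP/idP => [[[b v] /= [_ hv [_ ->]]] //|hw].
by exists (a, w); rewrite mem_enum in_setT.
Qed.

Lemma uniq_wordsE k : uniq (wordsE k).
Proof.
elim: k => [|k IH] //=; apply: allpairs_uniq => //; first exact: enum_uniq.
by move=> [a w] [b v] _ _ /= [-> ->].
Qed.

Lemma mem_words n w : (w \in words n) = (size w < n)%N.
Proof.
elim: n => [|n IH]; first by rewrite in_nil ltn0.
by rewrite /= mem_cat IH mem_wordsE ltnS orbC -leq_eqVlt.
Qed.

Lemma uniq_words n : uniq (words n).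
Proof.
elim: n => [|n IH] //=; rewrite cat_uniq IH uniq_wordsE andbT /=.
apply/hasPn => w; rewrite mem_wordsE mem_words => /eqP ->; by rewrite ltnn.
Qed.
End Words2.

Section PsiS.
Variables (F : fieldType) (p q : nat).
Local Notation fa := (fa F p q).
Local Notation word := (word p q).
Local Notation L := (seq (F * word)).
Local Notation M := 'M[F]_(p + q).
Implicit Types (f g : fa) (l : L).

Definition bounded f n := forall w : word, (n <= size w)%N -> f w = 0.
Definition bnd f := epsilon (inhabits 0%N) (bounded f).
Definition Sn f n : M := \sum_(w <- words p q n) f w *: Xw F w.
Definition Psi f := Sn f (bnd f).

Lemma bounded_mono f n m : bounded f n -> (n <= m)%N -> bounded f m.
Proof. by move=> h nm w hw; apply: h; apply: leq_trans hw. Qed.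

Lemma Sn_ext f n m : bounded f n -> (n <= m)%N -> Sn f m = Sn f n.
Proof.
move=> hb; elim: m => [|m IH]; first by rewrite leqn0 => /eqP ->.
rewrite leq_eqVlt => /orP[/eqP -> //|]; rewrite ltnS => nm.
rewrite {1}/Sn /= big_cat -/(Sn f m) IH // [X in _ + X = _]big_seq big1 ?addr0 // => w.
by rewrite mem_wordsE => /eqP sw; rewrite hb ?scale0r // sw.
Qed.

Lemma Psi_n f n : bounded f n -> Psi f = Sn f n.
Proof.
move=> hb; have hb' : bounded f (bnd f).
  exact: (epsilon_spec (inhabits 0%N) (bounded f) (ex_intro _ n hb)).
rewrite /Psi -(Sn_ext hb' (leq_maxl (bnd f) n)) (Sn_ext hb (leq_maxr (bnd f) n)).
by [].
Qed.

Definition Nl l := foldr (fun x m => maxn (size x.2).+1 m) 0%N l.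
Lemma Nl_mem l x : x \in l -> (size x.2 < Nl l)%N.
Proof.
elim: l => [//|y l IH]; rewrite in_cons => /orP[/eqP ->|h] /=.
  by rewrite leq_max leqnn.
by rewrite leq_max IH ?orbT.
Qed.

Lemma bounded_evl l : bounded (evl l) (Nl l).
Proof.
move=> w hw; rewrite /evl big_seq big1 // => x xl.
case: eqP => [e|]; last by rewrite mulr0.
by move: (Nl_mem xl); rewrite -e ltnNge hw.
Qed.

Lemma sum_words_delta n u (c : F) (Y : word -> M) : (size u < n)%N ->
  \sum_(w <- words p q n) (c * (w == u)%:R) *: Y w = c *: Y u.
Proof.
move=> hu; rewrite (bigD1_seq u) ?mem_words ?uniq_words //= eqxx mulr1.
by rewrite big1 ?addr0 // => w /negbTE ->; rewrite mulr0 scale0r.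
Qed.

Lemma Psi_evl l : Psi (evl l) = \sum_(x <- l) x.1 *: Xw F x.2.
Proof.
rewrite (Psi_n (@bounded_evl l)) /Sn /evl.
under eq_bigr do rewrite scaler_suml.
rewrite exchange_big big_seq [RHS]big_seq; apply: eq_bigr => x xl.
exact: sum_words_delta (Nl_mem xl).
Qed.

Lemma evl_lst f n : bounded f n -> evl [seq (f w, w) | w <- words p q n] = f.
Proof.
move=> hb; apply: functional_extensionality => w; rewrite /evl big_map /=.
have [hw|hw] := ltnP (size w) n.
  rewrite (bigD1_seq w) ?mem_words ?uniq_words //= eqxx mulr1 big1 ?addr0 // => u.
  by rewrite eq_sym => /negbTE ->; rewrite mulr0.
rewrite hb // big_seq big1 // => u; rewrite mem_words => hu.
case: eqP => [e|]; last by rewrite mulr0.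
by move: hu; rewrite -e ltnNge hw.
Qed.

Lemma isfa_bounded f : is_fa f -> exists n, bounded f n.
Proof. by case=> _ [n hn]; exists n. Qed.

Lemma common_bound f g : is_fa f -> is_fa g -> exists n, bounded f n /\ bounded g n.
Proof.
move=> /isfa_bounded [n hn] /isfa_bounded [m hm]; exists (maxn n m).
by split; [apply: bounded_mono hn (leq_maxl _ _)|apply: bounded_mono hm (leq_maxr _ _)].
Qed.

Lemma Psi_add f g : is_fa f -> is_fa g -> Psi (fa_add f g) = Psi f + Psi g.
Proof.
move=> hf hg; have [n [bf bg]] := common_bound hf hg.
by rewrite -(evl_lst bf) -(evl_lst bg) -evl_cat !Psi_evl big_cat.
Qed.

Lemma Psi_scale c f : is_fa f -> Psi (fa_scale c f) = c *: Psi f.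
Proof.
move=> hf; have [n bf] := isfa_bounded hf.
rewrite -(evl_lst bf) -evl_scale !Psi_evl /lscale big_map scaler_sumr.
by apply: eq_bigr => x _; rewrite scalerA.
Qed.

Lemma Xw_cat (u v : word) : Xw F (u ++ v) = Xw F u *m Xw F v.
Proof. by rewrite /Xw big_cat. Qed.

Lemma Psi_mul f g : is_fa f -> is_fa g -> Psi (fa_mul f g) = Psi f *m Psi g.
Proof.
move=> hf hg; have [n [bf bg]] := common_bound hf hg.
rewrite -(evl_lst bf) -(evl_lst bg) evl_mul !Psi_evl /lmul big_allpairs_dep /=.
rewrite mulmx_suml; apply: eq_bigr => a _; rewrite mulmx_sumr; apply: eq_bigr => b _.
by rewrite Xw_cat -scalemxAl -scalemxAr scalerA.
Qed.
End PsiS.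


Section Main.
Variables (F : fieldType) (p q : nat).
Hypothesis hc : [pchar F] =i pred0.
Hypotheses (hp : (1 < p)%N) (hq : (1 < q)%N).
Local Notation fa := (fa F p q).
Local Notation word := (word p q).
Local Notation L := (seq (F * word)).
Local Notation Q := (Q F p q).
Local Notation M := 'M[F]_(p + q).
Local Notation x := (@xq F p q).

Definition i0 : 'I_p := Ordinal (ltnW hp).
Definition i1 : 'I_p := Ordinal hp.
Definition j0 : 'I_q := Ordinal (ltnW hq).
Definition j1 : 'I_q := Ordinal hq.
Lemma hi : i0 != i1. Proof. by []. Qed.
Lemma hj : j0 != j1. Proof. by []. Qed.

Lemma halfQ (a b : Q) : a *+ 2 = b *+ 2 -> a = b.
Proof.
move=> e; have h2 : (2%:R : F) != 0 by rewrite ((pcharf0P F).1 hc 2).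
by rewrite -[a]scale1r -[b]scale1r -(mulVf h2) -!scalerA !scaler_nat e.
Qed.

Definition eQ (a b : 'I_(p + q)) : Q := ee x i0 i1 j0 j1 a b.
Definition sigma (A : M) : Q := \sum_a \sum_b A a b *: eQ a b.

Lemma sigma_add A B : sigma (A + B) = sigma A + sigma B.
Proof.
rewrite /sigma -big_split; apply: eq_bigr => a _; rewrite -big_split; apply: eq_bigr => b _.
by rewrite mxE scalerDl.
Qed.
Lemma sigma_scale c A : sigma (c *: A) = c *: sigma A.
Proof.
rewrite /sigma scaler_sumr; apply: eq_bigr => a _; rewrite scaler_sumr; apply: eq_bigr => b _.
by rewrite mxE scalerA.
Qed.
Lemma sigma0 : sigma 0 = 0.
Proof. by rewrite /sigma big1 // => a _; rewrite big1 // => b _; rewrite mxE scale0r. Qed.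

Lemma sigma_sum (I : Type) (r : seq I) (G : I -> M) : sigma (\sum_(i <- r) G i) = \sum_(i <- r) sigma (G i).
Proof. exact: (big_morph sigma sigma_add sigma0). Qed.

Lemma sigma_delta (a0 b0 : 'I_(p + q)) : sigma (delta_mx a0 b0) = eQ a0 b0.
Proof.
rewrite /sigma (bigD1 a0) //= (bigD1 b0) //= !mxE !eqxx scale1r.
rewrite big1 ?addr0; last by move=> b /negbTE nb; rewrite mxE nb andbF scale0r.
rewrite big1 ?addr0 // => a /negbTE na; rewrite big1 // => b _; by rewrite mxE na scale0r.
Qed.

Lemma delta_XX (a b : 'I_(p + q)) s t : (delta_mx a b : M) *m XX F s t =
  (if b == lshift q s then delta_mx a (rshift p t) else 0) +
  (if b == rshift p t then delta_mx a (lshift q s) else 0).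
Proof. by rewrite /XX /ER /ELf mulmxDr !mul_delta_mx_cond !mulrb. Qed.

Lemma sigma_if (c : bool) A : sigma (if c then A else 0) = if c then sigma A else 0.
Proof. by case: c; rewrite ?sigma0. Qed.

Lemma sigma_step A s t : sigma A * x s t = sigma (A *m XX F s t).
Proof.
rewrite {2}(matrix_sum_delta A) (mulmx_suml (XX F s t)) sigma_sum {1}/sigma mulr_suml.
apply: eq_bigr => a _; rewrite mulr_suml (mulmx_suml (XX F s t)) sigma_sum.
apply: eq_bigr => b _; rewrite scaleqAl -scalemxAl sigma_scale; congr (_ *: _).
rewrite delta_XX sigma_add !sigma_if !sigma_delta /eQ.
exact: (ee_rule (@RelQ F p q) halfQ hi hj).
Qed.

Lemma sigma_X s t : sigma (XX F s t) = x s t.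
Proof.
by rewrite /XX /ER /ELf sigma_add !sigma_delta /eQ -(ee_base (@RelQ F p q) halfQ hi hj).
Qed.

Lemma prod_sigma (w : word) (A : M) : sigma A * \prod_(a <- w) x a.1 a.2 = sigma (A *m Xw F w).
Proof.
elim: w A => [|a w IH] A; first by rewrite /Xw !big_nil mulr1 mulmx1.
by rewrite big_cons mulrA sigma_step IH /Xw big_cons mulmxA.
Qed.

Lemma piq_word (w : word) : piq [:: (1, w)] = \prod_(a <- w) x a.1 a.2 :> Q.
Proof.
elim: w => [|[a1 a2] w IH]; first by rewrite big_nil.
by rewrite big_cons -IH /xq piqM /lmul /gen1 /= mulr1.
Qed.

Lemma piq_word_sigma (w : word) : w != [::] -> piq [:: (1, w)] = sigma (Xw F w) :> Q.
Proof.
case: w => [//|a w] _; rewrite piq_word big_cons -sigma_X prod_sigma.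
by rewrite /Xw big_cons.
Qed.

Lemma piq_list (ws : seq word) (c : word -> F) :
  piq [seq (c w, w) | w <- ws] = \sum_(w <- ws) c w *: piq [:: (1, w)] :> Q.
Proof.
elim: ws => [|w ws IH]; first by rewrite big_nil.
rewrite big_cons -IH piqZ piqD /lscale /= mulr1.
by [].
Qed.

Lemma kernel (h : fa) : is_fa h -> Psi h = 0 -> envI h.
Proof.
move=> hh h0; have [n bh] := isfa_bounded hh.
have e : piq [seq (h w, w) | w <- words p q n] = sigma (Psi h).
  rewrite (Psi_n bh) /Sn sigma_sum piq_list; apply: eq_bigr => w _.
  rewrite sigma_scale; have [->|nw] := eqVneq w [::].
    by case: hh => -> _; rewrite !scale0r.
  by rewrite piq_word_sigma.
rewrite h0 sigma0 piq0 in e.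
have := piq_inj e; rewrite /EE (evl_lst bh) evl_nil; congr envI.
by apply: functional_extensionality => w; rewrite /fa_add /fa_opp /fa_scale /fa_zero mulr0 addr0.
Qed.
End Main.


Section Gens.
Variables (F : fieldType) (p q : nat).
Lemma sum_gen3 i j k l s t :
  \sum_(x <- lmul (lmul (gen1 F i j) (gen1 F k l)) (gen1 F s t)) x.1 *: Xw F x.2 =
  XX F i j *m XX F k l *m XX F s t :> 'M[F]_(p + q).
Proof.
by rewrite /lmul /gen1 /= big_seq1 /= !mul1r scale1r /Xw !big_cons big_nil mulr1 !mulmxE mulrA.
Qed.

Lemma sum_ifl (b1 b2 : bool) i t s j :
  \sum_(x <- lscale (-1) (ifl b1 (gen1 F i t) ++ ifl b2 (gen1 F s j))) x.1 *: Xw F x.2 =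
  - ((if b1 then XX F i t else 0) + (if b2 then XX F s j else 0)) :> 'M[F]_(p + q).
Proof.
by case: b1; case: b2; rewrite /ifl /lscale /gen1 /= ?big_cons ?big_nil /Xw ?big_cons ?big_nil
  ?addr0 ?mulr1 ?scaleN1r ?oppr0 ?opprD /= ?oppr0 ?add0r ?addr0.
Qed.

Lemma sum_LL i j k l s t :
  \sum_(x <- lmul (lmul (gen1 F i j) (gen1 F k l)) (gen1 F s t) ++
             lmul (lmul (gen1 F s t) (gen1 F k l)) (gen1 F i j)) x.1 *: Xw F x.2 =
  XX F i j * XX F k l * XX F s t + XX F s t * XX F k l * XX F i j :> 'M[F]_(p + q).
Proof. by rewrite big_cat !sum_gen3 !mulmxE. Qed.

Lemma Psi_rel i j k l s t : Psi (@rel_gen F p q i j k l s t) = 0.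
Proof.
rewrite rel_gen_evl /fa_opp -evl_scale -evl_cat Psi_evl big_cat /= sum_LL sum_ifl.
by rewrite RelM subrr.
Qed.
End Gens.

Unset Implicit Arguments.
Theorem theorem3p1 (F : fieldType) (p q : nat) :
  [pchar F] =i pred0 -> (1 < p)%N -> (1 < q)%N -> p != q ->
  exists Psi : fa F p q -> 'M[F]_(p + q),
    [/\ forall f g, is_fa f -> is_fa g -> Psi (fa_add f g) = Psi f + Psi g,
        forall (c : F) f, is_fa f -> Psi (fa_scale c f) = c *: Psi f,
        forall f g, is_fa f -> is_fa g -> Psi (fa_mul f g) = Psi f *m Psi g,
        forall M : 'M[F]_(p + q), exists2 f, is_fa f & Psi f = M &
        forall f g, is_fa f -> is_fa g ->
          (Psi f = Psi g <-> envI (fa_add f (fa_opp g)))].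
Proof.
move=> hc hp hq _; exists (@Psi F p q); split.
- exact: Psi_add.
- exact: Psi_scale.
- exact: Psi_mul.
- move=> A.
  set l := [seq (A a b, wordof (i0 hp) (i1 hp) (j0 hq) (j1 hq) a b) |
             a <- index_enum 'I_(p + q), b <- index_enum 'I_(p + q)].
  exists (evl l).
    split; last by exists (Nl l); exact: bounded_evl.
    rewrite /evl /l big_allpairs_dep big1 // => a _; rewrite big1 // => b _.
    by rewrite /= eq_sym (negbTE (wordof_nil _ _ _ _ _ _)) mulr0.
  rewrite Psi_evl /l big_allpairs_dep [RHS]matrix_sum_delta; apply: eq_bigr => a _.
  by apply: eq_bigr => b _; rewrite /= (Xw_wordof F (hi hp) (hj hq)).
- move=> f g hf hg; have hfg : is_fa (fa_add f (fa_opp g)).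
    by apply: isfa_add => //; apply: isfa_scale.
  have eP : Psi (fa_add f (fa_opp g)) = Psi f - Psi g.
    by rewrite Psi_add //; [rewrite /fa_opp Psi_scale // scaleN1r | apply: isfa_scale].
  split => [e|hI].
    by apply: (kernel hc hp hq) => //; rewrite eP e subrr.
  set S := fun h : fa F p q => is_fa h /\ Psi h = 0.
  have IS : is_ideal S.
    split.
    - by move=> h [].
    - split; first exact: isfa_zero.
      by rewrite -evl_nil Psi_evl big_nil.
    - move=> a b [ha pa] [hb pb]; split; first exact: isfa_add.
      by rewrite Psi_add // pa pb addr0.
    - move=> c a [ha pa]; split; first exact: isfa_scale.
      by rewrite Psi_scale // pa scaler0.
    - move=> a h ha [hh ph]; split; split; try exact: isfa_mul.
        by rewrite Psi_mul // ph mulmx0.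
      by rewrite Psi_mul // ph mul0mx.
  have gens : forall i j k l s t, S (@rel_gen F p q i j k l s t).
    by move=> i j k l s t; split; [exact: isfa_rel|exact: Psi_rel].
  have [_] := hI S IS gens.
  by rewrite eP => /eqP; rewrite subr_eq0 => /eqP.
Qed.
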